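(* Let $X=(X^{(1)},\dots,X^{(p)})\in\mathbb{R}^p$ be a random vector with finite second moments and strictly positive definite covariance matrix, let $\epsilon$ be a random variable with $E(\epsilon)=0$, $\mathrm{var}(\epsilon)=\sigma^2>0$, uncorrelated with $X^{(1)},\dots,X^{(p)}$, and let $Y=\delta+\sum_{j=1}^p\beta_jX^{(j)}+\epsilon$ with $\delta\in\mathbb{R}$, $\beta\in\mathbb{R}^p$. Suppose the distribution of $(X,Y)$ is partially faithful. Then the population PC-simple algorithm identifies the active set: $\mathcal{A}^{[m_{\mathrm{reach}}]}=\mathcal{A}=\{j=1,\dots,p;\ \beta_j\neq 0\}$.
   Context: $\rho(Z^{(1)},Z^{(2)}\mid W)$ denotes the population partial correlation; $X^{(\mathcal{S})}=\{X^{(j)};j\in\mathcal{S}\}$, $\{j\}^C=\{1,\dots,p\}\setminus\{j\}$. Partial faithfulness: for every $j$, if $\rho(Y,X^{(j)}\mid X^{(\mathcal{S})})=0$ for some $\mathcal{S}\subseteq\{j\}^C$ then $\rho(Y,X^{(j)}\mid X^{(\{j\}^C)})=0$. Population PC-simple algorithm: set $m=1$ and $\mathcal{A}^{[1]}=\{j:\mathrm{cor}(Y,X^{(j)})\neq 0\}$. Repeat: $m\leftarrow m+1$, $\mathcal{A}^{[m]}=\{j\in\mathcal{A}^{[m-1]}:\rho(Y,X^{(j)}\mid X^{(\mathcal{S})})\neq 0$ for all $\mathcal{S}\subseteq\mathcal{A}^{[m-1]}\setminus\{j\}$ with $|\mathcal{S}|=m-1\}$; until $|\mathcal{A}^{[m]}|\le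 m$. Define $m_{\mathrm{reach}}=\min\{m:|\mathcal{A}^{[m]}|\le m\}$. *)

(* Defs.v *)
From HB Require Import structures.
From mathcomp Require Import all_boot all_order all_algebra.
From mathcomp Require Import all_classical all_reals all_analysis.
Set Implicit Arguments.
Unset Strict Implicit.
Unset Printing Implicit Defensive.
Import Order.TTheory GRing.Theory Num.Theory.
Local Open Scope ring_scope.

Section PCsimple.
Context {d : measure_display} {T : measurableType d} {R : realType}
  (P : probability T R).

(* real-valued population covariance (finite under square integrability) *)
Definition cov (U V : T -> R) : R := fine (covariance P U V).

Definition cor (U V : T -> R) : R :=
  cov U V / Num.sqrt (cov U U * cov V V).

Context {p : nat}.

Definition covmx (X : 'I_p -> T -> R) : 'M[R]_p :=
  \matrix_(i, j) cov (X i) (X j).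

(* covariance matrix of X^(S) (S enumerated in increasing order) *)
Definition subcov (X : 'I_p -> T -> R) (S : {set 'I_p}) : 'M[R]_#|S| :=
  \matrix_(i, j) cov (X (enum_val i)) (X (enum_val j)).

Definition crosscov (U : T -> R) (X : 'I_p -> T -> R) (S : {set 'I_p})
  : 'rV[R]_#|S| := \row_i cov U (X (enum_val i)).

Definition pcov (U V : T -> R) (X : 'I_p -> T -> R) (S : {set 'I_p}) : R :=
  cov U V - (crosscov U X S *m invmx (subcov X S) *m (crosscov V X S)^T) 0 0.

Definition pcor (U V : T -> R) (X : 'I_p -> T -> R) (S : {set 'I_p}) : R :=
  pcov U V X S / Num.sqrt (pcov U U X S * pcov V V X S).

Definition partially_faithful (Y : T -> R) (X : 'I_p -> T -> R) : Prop :=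
  forall j : 'I_p,
    (exists S : {set 'I_p}, S \subset [set~ j] /\ pcor Y (X j) X S = 0) ->
    pcor Y (X j) X [set~ j] = 0.

(* pc_aux k = A^{[k+1]} of the population PC-simple algorithm *)
Fixpoint pc_aux (Y : T -> R) (X : 'I_p -> T -> R) (k : nat) : {set 'I_p} :=
  match k with
  | 0 => [set j | cor Y (X j) != 0]
  | k'.+1 =>
      let A := pc_aux Y X k' in
      [set j in A | [forall S : {set 'I_p},
          ((S \subset A :\ j) && (#|S| == k'.+1)) ==> (pcor Y (X j) X S != 0)]]
  end.

(* A^{[m]} for m >= 1 *)
Definition pcA (Y : T -> R) (X : 'I_p -> T -> R) (m : nat) : {set 'I_p} :=
  pc_aux Y X m.-1.

Lemma mreach_ex (Y : T -> R) (X : 'I_p -> T -> R) :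
  exists m, (0 < m)%N && (#|pcA Y X m| <= m)%N.
Proof.
exists p.+1; rewrite /=.
by apply: leq_trans (max_card _) _; rewrite card_ord leqnSn.
Qed.

Definition mreach (Y : T -> R) (X : 'I_p -> T -> R) : nat :=
  ex_minn (mreach_ex Y X).

End PCsimple.

(* Main.v *)
Require Import Defs.
From HB Require Import structures.
From mathcomp Require Import all_boot all_order all_algebra.
From mathcomp Require Import all_classical all_reals all_analysis.
Set Implicit Arguments.
Unset Strict Implicit.
Unset Printing Implicit Defensive.
Import Order.TTheory GRing.Theory Num.Theory.
Local Open Scope ring_scope.

Section Alg.
Context {R : rcfType} {n : nat} (Sig : 'M[R]_n).
Hypothesis symS : Sig^T = Sig.
Hypothesis pdS : forall v : 'rV_n, v != 0 -> 0 < (v *m Sig *m v^T) 0 0.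

Definition Emx (S : {set 'I_n}) : 'M[R]_(n, #|S|) :=
  \matrix_(k, i) (k == enum_val i)%:R.

Lemma mulEmx m (S : {set 'I_n}) (A : 'M[R]_(m, n)) r i :
  (A *m Emx S) r i = A r (enum_val i).
Proof.
rewrite !mxE (bigD1 (enum_val i)) //= mxE eqxx mulr1 big1 ?addr0 // => k /negbTE nk.
by rewrite mxE nk mulr0.
Qed.

Lemma trEmx_mul m (S : {set 'I_n}) (A : 'M[R]_(n, m)) i c :
  ((Emx S)^T *m A) i c = A (enum_val i) c.
Proof.
rewrite !mxE (bigD1 (enum_val i)) //= !mxE eqxx mul1r big1 ?addr0 // => k /negbTE nk.
by rewrite !mxE nk mul0r.
Qed.

Lemma pd_ge0 (v : 'rV_n) : 0 <= (v *m Sig *m v^T) 0 0.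
Proof.
have [->|nz] := eqVneq v 0; first by rewrite !mul0mx mxE.
exact/ltW/pdS.
Qed.

Definition Gmx S := (Emx S)^T *m Sig *m Emx S.

Lemma Gmx_unit S : Gmx S \in unitmx.
Proof.
rewrite -row_free_unit; apply: inj_row_free => v vG.
apply/eqP; apply/negPn/negP => nz.
have nz' : v *m (Emx S)^T != 0.
  apply: contraNneq nz => h; apply/eqP/rowP => i.
  have := congr1 (fun M : 'rV[R]_n => M 0 (enum_val i)) h.
  rewrite /= !mxE => <-. rewrite (bigD1 i) //= !mxE eqxx mulr1 big1 ?addr0 //.
  move=> k nk; rewrite !mxE (inj_eq enum_val_inj) eq_sym (negbTE nk) mulr0 //.
have := pdS nz'.
have -> : v *m (Emx S)^T *m Sig *m (v *m (Emx S)^T)^T = v *m Gmx S *m v^T.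
  by rewrite trmx_mul trmxK /Gmx !mulmxA.
by rewrite vG mul0mx mxE ltxx.
Qed.

Lemma Gmx_sym S : (Gmx S)^T = Gmx S.
Proof. by rewrite /Gmx !trmx_mul trmxK symS mulmxA. Qed.

Definition Wmx S := locked (Emx S *m invmx (Gmx S) *m (Emx S)^T).
Lemma WmxE S : Wmx S = Emx S *m invmx (Gmx S) *m (Emx S)^T.
Proof. by rewrite /Wmx -lock. Qed.
Definition Mmx S := Sig - Sig *m Wmx S *m Sig.

Lemma EtSW S : (Emx S)^T *m Sig *m Wmx S = (Emx S)^T.
Proof.
by rewrite WmxE !mulmxA -/(Gmx S) mulmxV ?Gmx_unit // mul1mx.
Qed.

Lemma Wmx_sym S : (Wmx S)^T = Wmx S.
Proof. by rewrite WmxE !trmx_mul trmxK trmx_inv Gmx_sym mulmxA. Qed.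

Lemma WSW S : Wmx S *m Sig *m Wmx S = Wmx S.
Proof.
rewrite {1}WmxE -!mulmxA [X in invmx _ *m X]mulmxA EtSW.
by rewrite WmxE mulmxA.
Qed.

Lemma EtM S : (Emx S)^T *m Mmx S = 0.
Proof. by rewrite /Mmx mulmxBr !mulmxA EtSW subrr. Qed.

Lemma Mmx_sym S : (Mmx S)^T = Mmx S.
Proof. by rewrite /Mmx raddfB /= !trmx_mul symS Wmx_sym mulmxA. Qed.

Lemma ME S : Mmx S *m Emx S = 0.
Proof. by apply: trmx_inj; rewrite trmx_mul Mmx_sym EtM trmx0. Qed.

Lemma Mquad S : (1%:M - Sig *m Wmx S) *m Sig *m (1%:M - Sig *m Wmx S)^T = Mmx S.
Proof.
rewrite raddfB /= trmx1 trmx_mul symS Wmx_sym.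
rewrite !mulmxBl !mul1mx !mulmxBr !mulmx1.
rewrite -!mulmxA (mulmxA (Wmx S) Sig (Wmx S *m Sig)) (mulmxA (Wmx S *m Sig)) WSW.
by rewrite /Mmx !mulmxA subrr subr0.
Qed.

Lemma quad_ge0 S (a : 'rV_n) : 0 <= (a *m Mmx S *m a^T) 0 0.
Proof.
rewrite -Mquad; set B := (1%:M - _).
rewrite (_ : a *m (B *m Sig *m B^T) *m a^T = (a *m B) *m Sig *m (a *m B)^T);
  last by rewrite trmx_mul !mulmxA.
exact: pd_ge0.
Qed.

Lemma quad_gt0 S (a : 'rV_n) : a *m (1%:M - Sig *m Wmx S) != 0 ->
   0 < (a *m Mmx S *m a^T) 0 0.
Proof.
move=> nz; rewrite -Mquad; set B := (1%:M - _).
rewrite (_ : a *m (B *m Sig *m B^T) *m a^T = (a *m B) *m Sig *m (a *m B)^T);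
  last by rewrite trmx_mul !mulmxA.
exact: pdS.
Qed.


Lemma pcov_formula S (a b : 'rV_n) c :
  (a *m Sig *m b^T) 0 0 + c
  - ((a *m Sig *m Emx S) *m invmx (Gmx S) *m (b *m Sig *m Emx S)^T) 0 0
  = (a *m Mmx S *m b^T) 0 0 + c.
Proof.
rewrite !trmx_mul symS /Mmx mulmxBr mulmxBl.
rewrite (_ : a *m Sig *m Emx S *m invmx (Gmx S) *m ((Emx S)^T *m (Sig *m b^T))
   = a *m (Sig *m Wmx S *m Sig) *m b^T); last by rewrite WmxE !mulmxA.
set A1 := a *m Sig *m b^T; set B1 := a *m _ *m b^T.
rewrite [(A1 - B1) 0 0]mxE [(- B1) 0 0]mxE.
by rewrite addrAC.
Qed.

Lemma rowM0 (S : {set 'I_n}) (bb : 'rV_n) : (forall k, k \notin S -> bb 0 k = 0) ->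
  bb *m Mmx S = 0.
Proof.
move=> hb.
have -> : bb = bb *m Emx S *m (Emx S)^T.
  apply/rowP => k; rewrite mxE.
  under eq_bigr => i _ do rewrite mulEmx !mxE.
  have [kS|kS] := boolP (k \in S).
    rewrite (bigD1 (enum_rank_in kS k)) //= enum_rankK_in // eqxx mulr1.
    rewrite big1 ?addr0 // => i ni.
    suff -> : (k == enum_val i) = false by rewrite mulr0.
    apply/negbTE; apply: contra ni => /eqP kE.
    by apply/eqP; apply: enum_val_inj; rewrite enum_rankK_in.
  rewrite hb // big1 // => i _.
  suff -> : (k == enum_val i) = false by rewrite mulr0.
  apply/negbTE; apply: contra kS => /eqP ->; exact: enum_valP.
by rewrite -mulmxA EtM mulmx0.
Qed.

Lemma ej_nz (S : {set 'I_n}) j : j \notin S ->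
  (delta_mx 0 j : 'rV_n) *m (1%:M - Sig *m Wmx S) != 0.
Proof.
move=> jS; apply/eqP => h.
have := congr1 (fun M : 'rV[R]_n => M 0 j) h.
rewrite mulmxBr mulmx1 WmxE !mulmxA !mxE eqxx /=.
rewrite big1 ?subr0; first by rewrite eqxx => /eqP; rewrite oner_eq0.
move=> i _; rewrite !mxE.
suff -> : (j == enum_val i) = false by rewrite mulr0.
apply/negbTE; apply: contra jS => /eqP ->; exact: enum_valP.
Qed.

Lemma bM_split j (bb : 'rV_n) :
  bb *m Mmx [set~ j] = bb 0 j *: ((delta_mx 0 j : 'rV_n) *m Mmx [set~ j]).
Proof.
have -> : bb = (bb - bb 0 j *: (delta_mx 0 j : 'rV_n)) + bb 0 j *: delta_mx 0 j
  by rewrite subrK.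
rewrite mulmxDl rowM0 ?add0r.
  by rewrite subrK scalemxAl.
move=> k; rewrite !inE negbK => /eqP ->.
by rewrite !mxE !eqxx /= mulr1 subrr.
Qed.

Lemma bM_ej j (bb : 'rV_n) :
  (bb *m Mmx [set~ j] *m (delta_mx 0 j : 'rV_n)^T) 0 0
  = bb 0 j * ((delta_mx 0 j : 'rV_n) *m Mmx [set~ j] *m (delta_mx 0 j : 'rV_n)^T) 0 0.
Proof. by rewrite bM_split -scalemxAl mxE. Qed.

End Alg.

Section Prob.
Context {d : measure_display} {T : measurableType d} {R : realType}
  (P : probability T R).

Local Notation L2 := (Lfun P 2%:E).

Lemma L2D (U V : T -> R) : U \in L2 -> V \in L2 -> (U \+ V)%R \in L2.
Proof.
move=> hU hV.
have h12 : (1 <= (2%:E : \bar R))%E by rewrite lee_fin ler1n.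
exact: (Lfun_addr_closed P h12).2.
Qed.

Lemma L2Z (a : R) (U : T -> R) : U \in L2 -> (a \o* U)%R \in L2.
Proof. by move=> hU; apply: Lfun_scale => //; rewrite ler1n. Qed.

Lemma L2cst (c : R) : (cst c : T -> R) \in L2.
Proof. exact: Lfun_cst. Qed.

Lemma L2_sum (I : Type) (s : seq I) (F : I -> T -> R) :
  (forall i, F i \in L2) -> (\sum_(i <- s) F i) \in L2.
Proof.
move=> hF; elim: s => [|x s IH]; first by rewrite big_nil; exact: (L2cst 0).
by rewrite big_cons; apply: L2D.
Qed.

Lemma L2_L1 (U : T -> R) : U \in L2 -> U \in Lfun P 1.
Proof.
move=> hU; have Pfin : P setT \is a fin_num := fin_num_measure P _ measurableT.
by have := Lfun_subset12 Pfin hU.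
Qed.

Lemma cov_fin (U V : T -> R) : U \in L2 -> V \in L2 ->
  covariance P U V \is a fin_num.
Proof.
move=> hU hV.
have Pfin : P setT \is a fin_num := fin_num_measure P _ measurableT.
apply: covariance_fin_num.
- exact: L2_L1.
- exact: L2_L1.
- exact: Lfun2_mul_Lfun1.
Qed.

Lemma covC (U V : T -> R) : cov P U V = cov P V U.
Proof. by rewrite /cov covarianceC. Qed.

Lemma covDl (U V Z : T -> R) : U \in L2 -> V \in L2 -> Z \in L2 ->
  cov P (U \+ V)%R Z = cov P U Z + cov P V Z.
Proof.
move=> hU hV hZ; rewrite /cov covarianceDl // fineD //; exact: cov_fin.
Qed.

Lemma covZl a (U Z : T -> R) : U \in L2 -> Z \in L2 ->
  cov P (a \o* U)%R Z = a * cov P U Z.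
Proof.
move=> hU hZ.
have Pfin : P setT \is a fin_num := fin_num_measure P _ measurableT.
rewrite /cov covarianceZl //.
- by rewrite fineM //; exact: cov_fin.
- exact: L2_L1.
- exact: L2_L1.
- exact: Lfun2_mul_Lfun1.
Qed.

Lemma cov_cstl c (Z : T -> R) : cov P (cst c) Z = 0.
Proof. by rewrite /cov covariance_cst_l. Qed.

Lemma cov_suml (I : Type) (s : seq I) (F : I -> T -> R) (Z : T -> R) :
  (forall i, F i \in L2) -> Z \in L2 ->
  cov P (\sum_(i <- s) F i) Z = \sum_(i <- s) cov P (F i) Z.
Proof.
move=> hF hZ; elim: s => [|x s IH]; first by rewrite !big_nil (cov_cstl 0).
rewrite !big_cons -IH; apply: covDl => //; exact: L2_sum.
Qed.

End Prob.


Lemma pcov_set0 d (T : measurableType d) (R : realType) (P : probability T R)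
  p (U V : T -> R) (X : 'I_p -> T -> R) : pcov P U V X finset.set0 = cov P U V.
Proof.
rewrite /pcov mxE big1 ?subr0 // => k _.
have := ltn_ord k; rewrite [X in (_ < X)%N]cards0.
by [].
Qed.

Lemma sum_app (T : Type) (R : realType) (p : nat) (F : 'I_p -> T -> R) t :
  (\sum_(j < p) F j) t = \sum_(j < p) F j t.
Proof. by rewrite fct_sumE. Qed.

Lemma mul_ej (R : pzRingType) n (A : 'rV[R]_n) j :
  (A *m (delta_mx j 0 : 'cV_n)) 0 0 = A 0 j.
Proof. by rewrite -colE mxE. Qed.

Theorem theorem3 (d : measure_display) (T : measurableType d) (R : realType)
  (P : probability T R) (p : nat)
  (X : 'I_p -> {RV P >-> R}) (eps : {RV P >-> R})
  (sigma delta : R) (beta : 'I_p -> R) (Y : T -> R) :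
  (forall j, (X j : T -> R) \in Lfun P 2%:E) ->
  (forall v : 'rV[R]_p, v != 0 ->
     0 < (v *m covmx P (fun j => (X j : T -> R)) *m v^T) 0 0) ->
  (eps : T -> R) \in Lfun P 2%:E ->
  ('E_P[eps] = 0)%E ->
  ('V_P[eps] = (sigma ^+ 2)%:E)%E -> 0 < sigma ->
  (forall j, covariance P (X j) eps = 0%E) ->
  (forall t, Y t = delta + \sum_(j < p) beta j * X j t + eps t) ->
  partially_faithful P Y (fun j => (X j : T -> R)) ->
  pcA P Y (fun j => (X j : T -> R)) (mreach P Y (fun j => (X j : T -> R)))
    = [set j | beta j != 0].
Proof.
move=> hX hPD heps _ hV hsig hcov hY hPF.
set Xf := (fun j => (X j : T -> R)) in hPD hPF *.
set Sig := covmx P Xf in hPD.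
have symS : Sig^T = Sig by apply/matrixP => i j; rewrite !mxE covC.
set b : 'rV[R]_p := \row_j beta j.
have hXf : forall j, Xf j \in Lfun P 2%:E by [].
have YE : Y = (cst delta \+ \sum_(j < p) (beta j \o* Xf j) \+ (eps : T -> R))%R.
  apply/funext => t; rewrite hY /=; congr (_ + _ + _).
  by rewrite sum_app; apply: eq_bigr => j _ /=; rewrite mulrC.
have hYL : Y \in Lfun P 2%:E.
  by rewrite YE; apply: L2D => //; apply: L2D; [exact: L2cst | apply: L2_sum => j; exact: L2Z].
have covY : forall Z, Z \in Lfun P 2%:E ->
    cov P Y Z = \sum_(j < p) beta j * cov P (Xf j) Z + cov P eps Z.
  move=> Z hZ; rewrite YE covDl //; last first.
    by apply: L2D; [exact: L2cst | apply: L2_sum => j; exact: L2Z].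
  rewrite covDl //; last by apply: L2_sum => j; exact: L2Z.
    2: exact: L2cst.
  rewrite cov_cstl add0r cov_suml //; last by move=> j; exact: L2Z.
  by congr (_ + _); apply: eq_bigr => j _; rewrite covZl.
have covXe : forall j, cov P (Xf j) eps = 0.
  by move=> j; rewrite /cov hcov.
have cYX : forall k, cov P Y (Xf k) = (b *m Sig) 0 k.
  move=> k; rewrite covY // covC covXe addr0 mxE.
  by apply: eq_bigr => j _; rewrite !mxE covC.
have cYY : cov P Y Y = (b *m Sig *m b^T) 0 0 + sigma ^+ 2.
  rewrite covY // mxE.
  have -> : cov P eps Y = sigma ^+ 2.
    rewrite covC covY // big1 ?add0r; last by move=> j _; rewrite covXe mulr0.
    by rewrite /cov -/(variance P eps) hV.
  congr (_ + _); apply: eq_bigr => j _.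
  by rewrite covC cYX !mxE mulrC.
have cXX : forall j k, cov P (Xf j) (Xf k) = ((delta_mx 0 j : 'rV_p) *m Sig) 0 k.
  by move=> j k; rewrite -rowE !mxE.
have pcovE : forall U V (a bb : 'rV_p) c S,
    (forall k, cov P U (Xf k) = (a *m Sig) 0 k) ->
    (forall k, cov P V (Xf k) = (bb *m Sig) 0 k) ->
    cov P U V = (a *m Sig *m bb^T) 0 0 + c ->
    pcov P U V Xf S = (a *m Mmx Sig S *m bb^T) 0 0 + c.
  move=> U V a bb c S hU hV0 hUV.
  have e1 : forall W (w : 'rV_p), (forall k, cov P W (Xf k) = (w *m Sig) 0 k) ->
      crosscov P W Xf S = w *m Sig *m Emx S.
    by move=> W w hW; apply/rowP => i; rewrite mxE mulEmx hW.
  have e2 : subcov P Xf S = Gmx Sig S.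
    by apply/matrixP => i j; rewrite /Gmx mulEmx trEmx_mul !mxE.
  rewrite /pcov (e1 U a hU) (e1 V bb hV0) e2 hUV.
  exact: (pcov_formula symS).
have pYX : forall j S, pcov P Y (Xf j) Xf S
    = (b *m Mmx Sig S *m (delta_mx 0 j : 'rV_p)^T) 0 0.
  move=> j S; rewrite -[RHS]addr0; apply: pcovE => //.
  by rewrite addr0 cYX trmx_delta mul_ej.
have pYY : forall S, pcov P Y Y Xf S = (b *m Mmx Sig S *m b^T) 0 0 + sigma ^+ 2.
  by move=> S; apply: pcovE.
have pXX : forall j S, pcov P (Xf j) (Xf j) Xf S
    = ((delta_mx 0 j : 'rV_p) *m Mmx Sig S *m (delta_mx 0 j : 'rV_p)^T) 0 0.
  move=> j S; rewrite -[RHS]addr0; apply: pcovE => //.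
  by rewrite addr0 cXX trmx_delta mul_ej.
set A0 := [set j | beta j != 0].
have F2 : forall j, beta j = 0 -> pcor P Y (Xf j) Xf A0 = 0.
  move=> j bj; rewrite /pcor pYX rowM0 ?mul0mx ?mxE ?mul0r //.
  by move=> k; rewrite inE negbK mxE => /eqP.
have F1' : forall j, beta j != 0 -> pcor P Y (Xf j) Xf [set~ j] != 0.
  move=> j bj.
  have s0 : 0 < ((delta_mx 0 j : 'rV_p) *m Mmx Sig [set~ j] *m (delta_mx 0 j : 'rV_p)^T) 0 0.
    apply: (quad_gt0 symS hPD); apply: ej_nz.
    by rewrite !inE negbK.
  have q0 : 0 <= (b *m Mmx Sig [set~ j] *m b^T) 0 0 := quad_ge0 symS hPD _ b.
  have bj0 : b 0 j != 0 by rewrite mxE.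
  rewrite /pcor pYX pXX pYY bM_ej.
  set s := (_ *m _ *m _) 0 0 in s0 *.
  apply: mulf_neq0; first by apply: mulf_neq0 => //; exact: lt0r_neq0.
  rewrite invr_neq0 // lt0r_neq0 // sqrtr_gt0 mulr_gt0 //.
  by apply: ltr_wpDl => //; rewrite exprn_gt0.
  exact: hPD.
have F1 : forall j, beta j != 0 -> forall S : {set 'I_p}, S \subset [set~ j] ->
    pcor P Y (Xf j) Xf S != 0.
  move=> j bj S sS; apply/eqP => h.
  by move: (F1' j bj); rewrite (hPF j) ?eqxx //; exists S.
have F0 : forall j, cor P Y (Xf j) = pcor P Y (Xf j) Xf finset.set0.
  by move=> j; rewrite /pcor !pcov_set0.
have G1 : forall k, A0 \subset pc_aux P Y Xf k.
  elim=> [|k IH].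
    apply/fintype.subsetP => j; rewrite !inE => bj.
    by rewrite F0; apply: F1 => //; exact: finset.sub0set.
  apply/fintype.subsetP => j jA; rewrite /= inE (fintype.subsetP IH j jA) /=.
  apply/forallP => S; apply/implyP => /andP[sS _].
  move: jA; rewrite inE => bj; apply: F1 => //.
  apply: fintype.subset_trans sS _; apply/fintype.subsetP => x; rewrite !inE => /andP[].
  by [].
have G2 : forall k, pc_aux P Y Xf k.+1 \subset pc_aux P Y Xf k.
  by move=> k; apply/fintype.subsetP => j; rewrite /= inE => /andP[].
have G3 : pc_aux P Y Xf #|A0| \subset A0.
  apply/fintype.subsetP => j jA; rewrite inE; apply/negP => /eqP bj.
  move: jA; case hq : #|A0| => [|q].
    rewrite /= inE F0.
    by rewrite (cards0_eq hq) in F2; rewrite F2 // eqxx.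
  rewrite /= inE => /andP[_ /forallP /(_ A0)].
  rewrite hq eqxx andbT F2 // eqxx implybF => /negP; apply.
  apply/fintype.subsetP => x xA; rewrite !inE.
  have -> /= : x != j by apply: contraNneq (_ : j \notin A0) => [<-|]; rewrite // inE bj eqxx.
  exact: (fintype.subsetP (G1 q)).
have G4 : forall i, pc_aux P Y Xf (#|A0| + i) = A0.
  elim=> [|i IH].
    by apply/eqP; rewrite finset.eqEsubset addn0 G3 G1.
  apply/eqP; rewrite finset.eqEsubset G1 andbT addnS.
  by apply: fintype.subset_trans (G2 _) _; rewrite IH.
rewrite /mreach; case: ex_minnP => m /andP[m0 hm] _.
rewrite /pcA.
have [le|lt] := leqP #|A0| m.-1.
  by rewrite -(subnKC le) G4.
apply/eqP; rewrite eq_sym finset.eqEcard G1 /=.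
apply: leq_trans hm _.
by rewrite -(prednK m0).
Qed.
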